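(* Let $p$ be a prime with $p\equiv 5\pmod 8$, and let $$U(k)=\binom{p-2}{k}_{2,2}+2^{p-1-k}\binom{p-2}{p-1-k}_{2,2}.$$ Then $U\!\left(\frac{p-1}{2}\right)\equiv 0\pmod p$.
   Context: For $n\in\mathbb N$ and $b,c\in\mathbb Z$, the generalized trinomial coefficients $\binom{n}{k}_{b,c}$ ($k\in\mathbb Z$) are the integers defined by $\left(x+b+\frac{c}{x}\right)^n=\sum_{k\in\mathbb Z}\binom{n}{k}_{b,c}x^k$. *)

(* Defs.v *)
From mathcomp Require Import all_boot all_algebra.
Set Implicit Arguments. Unset Strict Implicit. Unset Printing Implicit Defensive.
Import GRing.Theory Num.Theory.
Local Open Scope ring_scope.

(* Generalized trinomial coefficient: coefficient of x^k in (x + b + c/x)^n.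
   Expanding the product, choosing i factors x, j factors c/x and n-i-j
   factors b contributes n!/(i! j! (n-i-j)!) b^(n-i-j) c^j x^(i-j),
   and n!/(i! j! (n-i-j)!) = C(n,i) * C(n-i,j). *)
Definition gtrinom (n : nat) (k : int) (b c : int) : int :=
  \sum_(i < n.+1) \sum_(j < n.+1)
     if ((i%:Z - j%:Z == k) && (i + j <= n)%N)
     then ('C(n, i) * 'C(n - i, j))%:R * b ^+ (n - i - j) * c ^+ j
     else 0.

Definition U (p k : nat) : int :=
  gtrinom (p - 2) k%:Z 2 2 + 2 ^+ (p - 1 - k) * gtrinom (p - 2) (p - 1 - k)%N%:Z 2 2.

(* Main.v *)
Require Import Defs.
From mathcomp Require Import all_boot all_algebra.
From mathcomp Require Import zify.
From Stdlib Require Import Lia.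
Import GRing.Theory.
Local Open Scope ring_scope.

Lemma fact_split (R : comPzRingType) (h : nat) :
  \prod_(j < h + h) ((j.+1)%:R : R) = \prod_(j < h) (((2*j).+1)%:R * ((2*j).+2)%:R).
Proof.
elim: h => [|h IH]; first by rewrite !big_ord0.
rewrite addSn addnS !big_ord_recr /= IH mulrA; congr (_ * _ * _); congr (_%:R); lia.
Qed.

Lemma key (R : comPzRingType) (h : nat) : (4 * h + 1)%:R = 0 :> R ->
  (2 ^+ (h + h)) * \prod_(j < h) (((2*j).+1)%:R * ((2*j).+2)%:R) =
  (-1) ^+ h * \prod_(j < h) (((2*j).+1)%:R * ((2*j).+2)%:R) :> R.
Proof.
move=> H0.
rewrite -fact_split.
have -> : 2 ^+ (h + h) * \prod_(j < h + h) ((j.+1)%:R : R)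
   = \prod_(j < h + h) (2 * (j.+1)%:R : R).
  by rewrite big_split /= prodr_const card_ord.
rewrite big_split_ord /=.
rewrite [X in X * _ = _](eq_bigr (fun i : 'I_h => ((2*i).+2)%:R)); last first.
  by move=> i _; rewrite -[2]/(2%:R) -natrM; congr (_%:R); rewrite /=; lia.
rewrite [X in _ * X = _](eq_bigr (fun i : 'I_h => - ((2*(rev_ord i : nat)).+1)%:R)); last first.
  move=> i _.
  apply/eqP; rewrite -subr_eq0 opprK -H0. rewrite -[2]/(2%:R) -natrM -natrD; apply/eqP; congr (_%:R).
  have := ltn_ord i; rewrite /=; lia.
rewrite [X in _ * X = _](reindex_inj rev_ord_inj) /=.
rewrite [X in _ * X = _](eq_bigr (fun j : 'I_h => -((2*j).+1)%:R)); last first.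
  move=> j _; rewrite (_ : (h - (h - j.+1).+1)%N = j) //; have := ltn_ord j; lia.
rewrite prodrN card_ord fact_split big_split /=.
by rewrite mulrCA [X in _ * X = _]mulrC.
Qed.
Local Close Scope ring_scope.

Theorem mainTheorem9 (p : nat) :
  prime p -> p %% 8 = 5 ->
  ((p%:Z) %| U p ((p - 1) %/ 2))%Z.
Proof.
move=> pp p8.
have [t ht] : exists t, p = 8 * t + 5 by exists (p %/ 8); rewrite {1}(divn_eq p 8) p8; lia.
set h := (2 * t + 1)%N.
have hp : p = (4 * h + 1)%N by rewrite ht /h; lia.
have hm : ((p - 1) %/ 2 = h + h)%N by rewrite hp; lia.
rewrite hm.
have dv : (p %| (2 ^ (h + h) + 1))%N.
  rewrite (dvdn_pcharf (pchar_Fp pp)) natrD natrX.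
  have H0 : ((4 * h + 1)%:R = 0 :> 'F_p)%R by rewrite -hp pchar_Fp_0.
  have K := @key _ h H0.
  set P := (\prod_(j < h) _)%R in K.
  have P0 : (P != 0)%R.
    apply/prodf_eq0 => -[j _]; apply/negP; rewrite mulf_eq0 -!(dvdn_pcharf (pchar_Fp pp)).
    have := ltn_ord j => jh.
    by rewrite negb_or !gtnNdvd //; rewrite hp; lia.
  have := mulIf P0 K; rewrite -signr_odd /h oddD oddM /= expr1 => ->.
  by rewrite addNr.
rewrite /U (_ : (p - 1 - (h + h))%N = (h + h)%N); last by rewrite hp; lia.
rewrite -{1}(mul1r (gtrinom _ _ _ _)) -mulrDl dvdz_mulr //.
have -> : ((1 + 2 ^+ (h + h))%R : int) = Posz (2 ^ (h + h) + 1)%N.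
  by rewrite -natz natrD natrX addrC.
by [].
Qed.
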